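(* Let $R$ be a commutative ring with unit and $M$ an $R$-module. Let $a_1,\dots,a_l\in R$, let $b\in M$ be nonzero, and put $a=\sum_{i=1}^l a_i$. The following are equivalent: (1) the equation $\sum_{i=1}^l a_i m_i=b$ is partition regular over $M$; (2) this equation has a constant solution in $M$, i.e. there is $m\in M$ with $\sum_{i=1}^l a_i m=b$; (3) $b\in aM$.
   Context: For a $k\times l$ matrix $\mathbf{A}$ over $R$ and $\mathbf b\in M^k$, the equation $\mathbf{A}\mathbf{m}=\mathbf b$ is partition regular over $M$ if for every $r\ge1$ and every map $\chi\colon M\to\{1,\dots,r\}$ there exists $\mathbf m=(m_1,\dots,m_l)^{\intercal}\in M^l$, not all $m_i$ zero, with $\mathbf{A}\mathbf{m}=\mathbf b$ and $\chi(m_1)=\dots=\chi(m_l)$. Here $k=1$ and $\mathbf A=(a_1,\dots,a_l)$. *)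

(* Defs.v *)
From mathcomp Require Import all_boot all_order all_algebra.
Set Implicit Arguments. Unset Strict Implicit. Unset Printing Implicit Defensive.
Import GRing.Theory.
Local Open Scope ring_scope.

Definition partition_regular (R : comRingType) (M : lmodType R) (l : nat)
    (a : 'I_l -> R) (b : M) : Prop :=
  forall (r : nat), (0 < r)%N -> forall chi : M -> 'I_r,
    exists m : 'I_l -> M,
      [/\ exists i, m i != 0,
          \sum_(i < l) a i *: m i = b
        & forall i j, chi (m i) = chi (m j)].

(* Main.v *)
Require Import Defs.
From mathcomp Require Import all_boot all_order all_algebra.
From mathcomp Require Import boolp classical_sets ring lra.
Set Implicit Arguments. Unset Strict Implicit. Unset Printing Implicit Defensive.
Import GRing.Theory Num.Theory.
Local Open Scope ring_scope.

Definition isZ (q : rat) : bool := q \is a Num.int.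

Definition prevalid (M : zmodType) (D : M -> Prop) (f : M -> rat) :=
  [/\ D 0, (forall x y, D x -> D y -> D (x + y)), (forall x, D x -> D (- x)) &
     (forall x y, D x -> D y -> isZ (f (x + y) - f x - f y))].

Definition extends (M : zmodType) (D : M -> Prop) (f : M -> rat) D' f' :=
  forall x, D x -> D' x /\ isZ (f' x - f x).

Ltac zt := unfold isZ in *; repeat first [assumption | apply: rpredD | apply: rpredB | rewrite rpredN | apply: rpredM | apply: intr_int].

Lemma isZ_int (k : int) : isZ k%:~R. Proof. exact: intr_int. Qed.

Lemma pv_f0 (M : zmodType) D (f : M -> rat) : prevalid D f -> isZ (f 0).
Proof.
case=> D0 _ _ fa; have := fa 0 0 D0 D0; rewrite addr0.
have -> : f 0 - f 0 - f 0 = - f 0 by ring.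
by rewrite /isZ rpredN.
Qed.

Lemma pv_fN (M : zmodType) D (f : M -> rat) x : prevalid D f -> D x ->
  isZ (f (- x) + f x).
Proof.
move=> pv Dx; have [D0 _ DN fa] := pv; have := fa _ _ (DN _ Dx) Dx.
rewrite addNr => h; have h0 := pv_f0 pv.
have -> : f (- x) + f x = f 0 - (f 0 - f (- x) - f x) by ring.
by rewrite /isZ rpredB.
Qed.

Lemma pv_Dz (M : zmodType) D (f : M -> rat) x (k : int) : prevalid D f -> D x ->
  D (x *~ k).
Proof.
move=> [D0 DD DN _] Dx.
have hn : forall n : nat, D (x *+ n).
  by elim=> [|n ih]; rewrite ?mulr0n // mulrS; apply: DD.
by case: k => n; rewrite ?NegzE ?mulrNz; [exact: hn | apply: DN; exact: hn].
Qed.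

Lemma pv_fz (M : zmodType) D (f : M -> rat) x (k : int) : prevalid D f -> D x ->
  isZ (f (x *~ k) - k%:~R * f x).
Proof.
move=> pv Dx; have [D0 DD DN fa] := pv.
have hn : forall n : nat, isZ (f (x *+ n) - n%:R * f x).
  elim=> [|n ih]; first by rewrite mulr0n mul0r subr0; exact: pv_f0 pv.
  rewrite mulrS.
  have Dn : D (x *+ n) by have := pv_Dz (Posz n) pv Dx.
  have := fa _ _ Dx Dn => h.
  have -> : f (x + x *+ n) - n.+1%:R * f x =
     (f (x + x *+ n) - f x - f (x *+ n)) + (f (x *+ n) - n%:R * f x).
    by rewrite -addn1 natrD; ring.
  by rewrite /isZ rpredD.
case: k => n; first by exact: hn.
rewrite NegzE mulrNz.
have Dn : D (x *+ n.+1) by have := pv_Dz (Posz n.+1) pv Dx.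
have h1 := pv_fN pv Dn; have h2 := hn n.+1.
have -> : f (- (x *+ n.+1)) - (- n.+1%:Z)%:~R * f x =
   (f (- (x *+ n.+1)) + f (x *+ n.+1)) - (f (x *+ n.+1) - n.+1%:R * f x).
  by rewrite mulrNz; ring.
by rewrite /isZ rpredB.
Qed.
Lemma extend (M : zmodType) (D : M -> Prop) (f : M -> rat) (x : M) (v : rat) :
  prevalid D f ->
  (forall k : int, D (x *~ k) -> isZ (f (x *~ k) - k%:~R * v)) ->
  exists D' f', [/\ prevalid D' f', extends D f D' f', D' x & isZ (f' x - v)].
Proof.
move=> pv hv; have [D0 DD DN fa] := pv.
pose D' (y : M) := exists p : M * int, D p.1 /\ y = p.1 + x *~ p.2.
pose f' (y : M) := match pselect (D' y) with
  | left h => let p := sval (cid h) in f p.1 + p.2%:~R * v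
  | right _ => 0 end.
have rep : forall y d k, D d -> y = d + x *~ k -> isZ (f' y - (f d + k%:~R * v)).
  move=> y d k Dd ->; rewrite /f'; case: pselect => [h|hn]; last first.
    by exfalso; apply: hn; exists (d, k).
  case: (cid h) => [[p1 p2] /= [Dp1 e]].
  have e2 : x *~ (k - p2) = p1 - d.
    have e' : p1 = d + x *~ k - x *~ p2 by rewrite e addrK.
    by rewrite mulrzBr e' addrAC [d + _]addrC addrK.
  have Dp : D (p1 - d) by apply: DD => //; exact: DN.
  have h1 := fa _ _ Dp1 (DN _ Dd).
  have h2 := pv_fN pv Dd.
  have h3 := hv (k - p2); rewrite e2 in h3; have {}h3 := h3 Dp.
  have -> : f p1 + p2%:~R * v - (f d + k%:~R * v) =
    - (f (p1 - d) - f p1 - f (- d)) - (f (- d) + f d) + (f (p1 - d) - (k - p2)%:~R * v).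
    by rewrite intrB; ring.
  by zt.
have hD'z : D' 0 by exists (0, 0); rewrite /= mulr0z addr0.
exists D', f'; split.
- split=> //.
  + move=> y1 y2 [[d1 k1] /= [D1 ->]] [[d2 k2] /= [D2 ->]].
    by exists (d1 + d2, k1 + k2); split; [exact: DD | rewrite /= mulrzDr addrACA].
  + move=> y [[d k] /= [Dd ->]]; exists (- d, - k); split; first exact: DN.
    by rewrite /= mulrNz opprD.
  + move=> y1 y2 [[d1 k1] /= [D1 e1]] [[d2 k2] /= [D2 e2]].
    have r1 := rep _ _ _ D1 e1; have r2 := rep _ _ _ D2 e2.
    have r3 := rep (y1 + y2) (d1 + d2) (k1 + k2) (DD _ _ D1 D2).
    rewrite e1 e2 mulrzDr in r3 *; have {}r3 := r3 (addrACA _ _ _ _).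
    rewrite -e1 -e2 in r1 r2 r3 *.
    have h := fa _ _ D1 D2.
    have -> : f' (y1 + y2) - f' y1 - f' y2 =
      (f' (y1 + y2) - (f (d1 + d2) + (k1 + k2)%:~R * v)) - (f' y1 - (f d1 + k1%:~R * v))
      - (f' y2 - (f d2 + k2%:~R * v)) + (f (d1 + d2) - f d1 - f d2).
      by rewrite intrD; ring.
    by zt.
- move=> y Dy; split; first by exists (y, 0); rewrite /= mulr0z addr0.
  have := rep y y 0 Dy (ltac:(by rewrite mulr0z addr0)).
  by rewrite mul0r addr0.
- by exists (0, 1); rewrite /= add0r.
- have := rep x 0 1 D0 (ltac:(by rewrite add0r)).
  have h0 := pv_f0 pv => h.
  have -> : f' x - v = (f' x - (f 0 + 1%:~R * v)) + f 0 by ring.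
  by zt.
Qed.

Lemma notZ01 (q : rat) : 0 < q -> q < 1 -> ~ isZ q.
Proof.
move=> h0 h1 /intrP [m em]; move: h0 h1; rewrite em ltr0z ltrz1.
by clear em; case: m => [[|n]|n].
Qed.

Lemma exists_v (M : zmodType) (D : M -> Prop) (f : M -> rat) (x : M) :
  prevalid D f ->
  exists v, (forall k : int, D (x *~ k) -> isZ (f (x *~ k) - k%:~R * v)) /\
            ((forall y, D y -> isZ (f y)) -> ~ D x -> ~ isZ v).
Proof.
move=> pv; have [D0 DD DN fa] := pv.
case: (pselect (exists n : nat, (0 < n)%N /\ D (x *+ n))) => [hex|hno]; last first.
  exists (1 / 2); split; last by move=> _ _; apply: notZ01.
  move=> k; case: k => [[|n]|n] Dk.
  - by rewrite mulr0z mul0r subr0; exact: pv_f0 pv.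
  - by exfalso; apply: hno; exists n.+1.
  - exfalso; apply: hno; exists n.+1; split => //.
    by move: Dk; rewrite NegzE mulrNz => /DN; rewrite opprK.
have hb : exists n, (fun n => `[< (0 < n)%N /\ D (x *+ n) >]) n.
  by case: hex => n hn; exists n; apply/asboolP.
case: (ex_minnP hb) => n0 /asboolP [n0pos Dn0] minn.
pose w := f (x *+ n0).
have n0R : (n0%:R : rat) != 0 by rewrite pnatr_eq0 -lt0n.
exists ((w - (Num.floor w)%:~R + 1) / n0%:R); split.
  move=> k Dk.
  have nz : (n0%:Z != 0) by rewrite eqz_nat -lt0n.
  set q := (k %/ n0)%Z; set r := (k %% n0)%Z.
  have ek := divz_eq k n0; rewrite -/q -/r in ek.
  have r0 : 0 <= r by exact: modz_ge0.
  have rn : r < n0%:Z by apply: ltz_pmod; rewrite ltz_nat.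
  have ek2 : x *~ k = (x *+ n0) *~ q + x *~ r by rewrite {1}ek mulrzDr mulrC mulrzA.
  have exr : x *~ r = x *~ k - (x *+ n0) *~ q.
    by rewrite ek2 [_ + x *~ r]addrC addrK.
  have Dr : D (x *~ r).
    rewrite exr; exact: (DD _ _ Dk (DN _ (pv_Dz q pv Dn0))).
  have r00 : r = 0.
    move: r0 rn Dr; case E: r => [[|m]|m] // _ rn Dr; exfalso.
    have : (n0 <= m.+1)%N by apply: minn; apply/asboolP.
    by rewrite leqNgt -ltz_nat rn.
  rewrite r00 addr0 in ek2.
  have hq := pv_fz q pv Dn0.
  rewrite ek2; rewrite -/w in hq.
  have -> : f (x *+ n0 *~ q) - k%:~R * ((w - (Num.floor w)%:~R + 1) / n0%:R) =
     (f (x *+ n0 *~ q) - q%:~R * w) + (q * (Num.floor w - 1))%:~R.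
    rewrite ek r00 addr0 !rmorphM /= !rmorphB /=. change (n0%:~R : rat) with (n0%:R : rat). by field.
  by zt.
move=> all0 nDx.
have wZ : isZ w := all0 _ Dn0.
rewrite floorK // subrr add0r.
have n0gt1 : (1 < n0)%N.
  move: n0pos Dn0; rewrite leq_eqVlt => /orP [/eqP e|//] Dx1.
  by exfalso; apply: nDx; move: Dx1; rewrite -e mulr1n.
apply: notZ01; first by rewrite divr_gt0 // ltr0n.
by rewrite ltr_pdivrMr ?ltr0n 1?ltnW // mul1r ltr1n.
Qed.

Lemma ext_trans (M : zmodType) (D1 D2 D3 : M -> Prop) f1 f2 f3 :
  extends D1 f1 D2 f2 -> extends D2 f2 D3 f3 -> extends D1 f1 D3 f3.
Proof.
move=> h12 h23 x Dx; have [D2x z1] := h12 x Dx; have [D3x z2] := h23 x D2x.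
split => //; have -> : f3 x - f1 x = (f3 x - f2 x) + (f2 x - f1 x) by ring.
by zt.
Qed.

Definition validp (M : zmodType) (D0 : M -> Prop) (b : M)
  (p : (M -> Prop) * (M -> rat)) :=
  [/\ prevalid p.1 p.2, extends D0 (fun _ => 0) p.1 p.2, p.1 b & ~ isZ (p.2 b)].

Lemma validp_ext (M : zmodType) (D0 : M -> Prop) (b : M) D f D' f' :
  validp D0 b (D, f) -> prevalid D' f' -> extends D f D' f' -> validp D0 b (D', f').
Proof.
move=> [pv e0 Db nb] pv' e; split => //=.
- exact: ext_trans e0 e.
- by have [] := e b Db.
- move=> h; apply: nb => /=; have [_ z] := e b Db.
  have -> : f b = f' b - (f' b - f b) by ring.
  by zt.
Qed.

Lemma exists_char (M : zmodType) (D0 : M -> Prop) (b : M) :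
  prevalid D0 (fun _ => 0) -> ~ D0 b ->
  exists psi : M -> rat, [/\ forall x y, isZ (psi (x + y) - psi x - psi y),
     forall y, D0 y -> isZ (psi y) & ~ isZ (psi b)].
Proof.
move=> pv0 nb.
pose T := {p | validp D0 b p}.
have [v [hv hv2]] := exists_v b pv0.
have {}hv2 : ~ isZ v by apply: hv2 => // y _; exact: int_num0.
have [D1 [f1 [pv1 e1 D1b z1]]] := extend pv0 hv.
have val1 : validp D0 b (D1, f1).
  split => // h; apply: hv2; have -> : v = f1 b - (f1 b - v) by ring.
  by zt.
pose t0 : T := exist _ (D1, f1) val1.
pose Rr (s t : T) := `[< extends (sval s).1 (sval s).2 (sval t).1 (sval t).2 >].
have [t tmax] : exists t, premaximal (fun x y => Rr x y) t.
  apply: (ZL_preorder t0).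
  - move=> s; apply/asboolP => x Dx; split => //; rewrite subrr; exact: int_num0.
  - move=> r s u /asboolP h1 /asboolP h2; apply/asboolP; exact: ext_trans h1 h2.
  move=> A tot.
  case: (pselect (exists t, A t)) => [[t1 At1] | none]; last first.
    by exists t0 => s As; exfalso; apply: none; exists s.
  pose DU (y : M) := exists t : T, A t /\ (sval t).1 y.
  pose fU (y : M) := match pselect (DU y) with
    | left h => (sval (sval (cid h))).2 y | right _ => 0 end.
  have key : forall (s : T) y, A s -> (sval s).1 y -> isZ (fU y - (sval s).2 y).
    move=> s y As Dy; rewrite /fU; case: pselect => [h|hn]; last first.
      by exfalso; apply: hn; exists s.
    case: (cid h) => s' [As' Ds'y] /=.
    case: (tot s s' As As') => /asboolP H.
      by have [_ ->] := H y Dy.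
    have [_ hz] := H y Ds'y; rewrite -opprB; zt.
  have two : forall y1 y2, DU y1 -> DU y2 ->
      exists s : T, [/\ A s, (sval s).1 y1 & (sval s).1 y2].
    move=> y1 y2 [s1 [A1 D1y]] [s2 [A2 D2y]].
    case: (tot s1 s2 A1 A2) => /asboolP H.
      by exists s2; split => //; have [] := H y1 D1y.
    by exists s1; split => //; have [] := H y2 D2y.
  have valU : validp D0 b (DU, fU).
    have [[pt1 _ _ _] e0 bt1 nbt1] := svalP t1.
    split => /=.
    - split.
      + by exists t1; split => //; have [] := pt1.
      + move=> y1 y2 h1 h2; have [s [As Dy1 Dy2]] := two _ _ h1 h2.
        have [[_ DD _ _] _ _ _] := svalP s.
        by exists s; split => //; apply: DD.
      + move=> y [s [As Dy]]; have [[_ _ DN _] _ _ _] := svalP s.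
        by exists s; split => //; apply: DN.
      + move=> y1 y2 h1 h2; have [s [As Dy1 Dy2]] := two _ _ h1 h2.
        have [[_ DD _ fa] _ _ _] := svalP s.
        have k1 := key s _ As Dy1; have k2 := key s _ As Dy2.
        have k3 := key s _ As (DD _ _ Dy1 Dy2); have k4 := fa _ _ Dy1 Dy2.
        have -> : fU (y1 + y2) - fU y1 - fU y2 =
          (fU (y1 + y2) - (sval s).2 (y1 + y2)) - (fU y1 - (sval s).2 y1)
          - (fU y2 - (sval s).2 y2) + ((sval s).2 (y1 + y2) - (sval s).2 y1 - (sval s).2 y2).
          by ring.
        by zt.
    - move=> y D0y; have [Dy zy] := e0 y D0y; split; first by exists t1.
      have k := key t1 _ At1 Dy.
      have -> : fU y - 0 = (fU y - (sval t1).2 y) + ((sval t1).2 y - 0) by ring.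
      by zt.
    - by exists t1.
    - move=> h; apply: nbt1; have k := key t1 _ At1 bt1.
      have -> : (sval t1).2 b = fU b - (fU b - (sval t1).2 b) by ring.
      by zt.
  exists (exist _ (DU, fU) valU) => s As; apply/asboolP => y Dy /=; split.
    by exists s.
  exact: key.
have [pvt e0t bt nbt] := svalP t; have [_ DD DN fa] := pvt.
have allD : forall x, (sval t).1 x.
  move=> x; have [w [hw _]] := exists_v x pvt.
  have [D2 [f2 [pv2 e2 D2x _]]] := extend pvt hw.
  have val2 : validp D0 b (D2, f2).
    by apply: (@validp_ext _ _ _ (sval t).1 (sval t).2) => //; case: (sval t) (svalP t).
  have /asboolP h := tmax (exist _ (D2, f2) val2) (ltac:(by apply/asboolP)).
  by have [] := h x D2x.
exists (sval t).2; split => //.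
- by move=> x y; apply: fa.
- by move=> y D0y; have [_ z] := e0t y D0y; rewrite subr0 in z.
Qed.

Lemma psum (M : zmodType) (psi : M -> rat) (I : Type) (s : seq I) (F : I -> M) :
  (forall x y, isZ (psi (x + y) - psi x - psi y)) ->
  isZ (psi (\sum_(i <- s) F i) - \sum_(i <- s) psi (F i)).
Proof.
move=> padd; have p0 : isZ (psi 0).
  have := padd 0 0; rewrite addr0 => h.
  have -> : psi 0 = - (psi 0 - psi 0 - psi 0) by ring.
  by zt.
elim: s => [|x s ih]; first by rewrite !big_nil subr0.
rewrite !big_cons; have h := padd (F x) (\sum_(i <- s) F i).
have -> : psi (F x + \sum_(i <- s) F i) - (psi (F x) + \sum_(i <- s) psi (F i)) =
  (psi (F x + \sum_(i <- s) F i) - psi (F x) - psi (\sum_(i <- s) F i)) +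
  (psi (\sum_(i <- s) F i) - \sum_(i <- s) psi (F i)) by ring.
by zt.
Qed.

Definition frc (u : rat) : rat := u - (Num.floor u)%:~R.

Lemma frc_bounds u : 0 <= frc u < 1.
Proof.
have /andP [h1 h2] := floor_itv u; rewrite rmorphD rmorph1 /= in h2.
rewrite /frc; apply/andP; split; lra.
Qed.

Definition cc (K : nat) (u : rat) : nat := absz (Num.floor (K%:R * frc u)).

Lemma cc_ge0 K u : 0 <= Num.floor (K%:R * frc u).
Proof.
by rewrite floor_ge0 mulr_ge0 ?ler0n //; have /andP [] := frc_bounds u.
Qed.

Lemma cc_lt K u : (0 < K)%N -> (cc K u < K)%N.
Proof.
move=> K0; rewrite /cc -ltz_nat gez0_abs ?cc_ge0 // floor_lt_int.
have /andP [_ h] := frc_bounds u.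
by rewrite -[X in _ < X]mulr1 ltr_pM2l // ltr0n.
Qed.

Lemma cc_cell K u w : (0 < K)%N -> cc K u = cc K w ->
  `|frc u - frc w| * K%:R < 1.
Proof.
move=> K0 e.
have e' : Num.floor (K%:R * frc u) = Num.floor (K%:R * frc w).
  by move: e; rewrite /cc => /(congr1 Posz); rewrite !gez0_abs ?cc_ge0.
have /andP [a1 a2] := floor_itv (K%:R * frc u).
have /andP [b1 b2] := floor_itv (K%:R * frc w).
rewrite e' in a1 a2; move: a1 a2 b1 b2.
set c := Num.floor _; rewrite rmorphD rmorph1 /=.
have Kp : (0 : rat) < K%:R by rewrite ltr0n.
move=> *.
have -> : `|frc u - frc w| * K%:R = `|(frc u - frc w) * K%:R|.
  by rewrite normrM [`|K%:R|]ger0_norm ?ler0n.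
rewrite ltr_norml.
apply/andP; split; nra.
Qed.

Lemma final (q X : rat) (l : nat) : ~ isZ q -> isZ (q - X) ->
  `|X| * (l * absz (denq q)).+1%:R < l%:R -> False.
Proof.
move=> nq /intrP [z ez] hlt.
have dpos := denq_gt0 q.
have dR : ((absz (denq q))%:R : rat) = (denq q)%:~R.
  by rewrite natr_absz gtr0_norm.
pose n := numq q - denq q * z.
have en : (n%:~R : rat) = (denq q)%:~R * X.
  rewrite /n rmorphB rmorphM /= numqE.
  have -> : X = q - z%:~R by rewrite -ez; ring.
  ring.
have n0 : n != 0.
  apply/negP => /eqP n0; apply: nq.
  have : (denq q)%:~R * X = 0 by rewrite -en n0.
  move/eqP; rewrite mulf_eq0 intr_eq0 (negbTE (lt0r_neq0 dpos)) /= => /eqP X0.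
  by rewrite -[q]subr0 -X0 ez; exact: intr_int.
have n1 : (1 : rat) <= `|(n%:~R : rat)|.
  by apply: norm_intr_ge1; [exact: intr_int | rewrite intr_eq0].
rewrite en normrM [`|(denq q)%:~R|]gtr0_norm ?ltr0z // in n1.
move: hlt; rewrite -addn1 natrD natrM dR => hlt.
have Xg : 0 <= `|X| by [].
have lg : (0 : rat) <= l%:R by [].
nra.
Qed.

Theorem theorem5p2 (R : comRingType) (M : lmodType R) (l : nat)
    (a : 'I_l -> R) (b : M) (hb : b != 0) :
  (partition_regular a b <-> exists m : M, \sum_(i < l) a i *: m = b) /\
  ((exists m : M, \sum_(i < l) a i *: m = b) <->
     exists m : M, b = (\sum_(i < l) a i) *: m).
Proof.
have sumE : forall m : M, \sum_(i < l) a i *: m = (\sum_(i < l) a i) *: m.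
  by move=> m; rewrite scaler_suml.
split; last first.
  by split => [[m hm]|[m hm]]; exists m; [rewrite -hm sumE | rewrite sumE hm].
split; last first.
  move=> [m hm] r r0 chi.
  have m0 : m != 0.
    apply: contraNneq hb => m0; rewrite -hm m0 big1 // => i _; exact: scaler0.
  case: (pselect (exists i : 'I_l, true)) => [[i0 _]|nol]; last first.
    exfalso; move: hb; rewrite -hm big1 ?eqxx // => i _.
    by exfalso; apply: nol; exists i.
  by exists (fun _ => m); split => //; exists i0.
move=> PR; case: (pselect (exists m : M, \sum_(i < l) a i *: m = b)) => // nosol.
exfalso.
pose a0 := \sum_(i < l) a i.
pose D0 (y : M) := exists m, y = a0 *: m.
have pv0 : prevalid D0 (fun _ => 0).
  split.
  - by exists 0; rewrite scaler0.
  - by move=> _ _ [m1 ->] [m2 ->]; exists (m1 + m2); rewrite scalerDr.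
  - by move=> _ [m ->]; exists (- m); rewrite scalerN.
  - by move=> *; rewrite !subr0; exact: int_num0.
have nD0b : ~ D0 b by move=> [m hm]; apply: nosol; exists m; rewrite sumE hm.
have [psi [padd p0 pb]] := exists_char pv0 nD0b.
pose N := (l * absz (denq (psi b)))%N.
pose F (y : M) : {ffun 'I_l -> 'I_N.+1} := [ffun i => inord (cc N.+1 (psi (a i *: y)))].
pose chi (y : M) := enum_rank (F y).
have r0 : (0 < #|{ffun 'I_l -> 'I_N.+1}|)%N by apply/card_gt0P; exists (F 0).
have [mm [[i0 _] hsum hchi]] := PR _ r0 chi.
pose u i := psi (a i *: mm i).
pose w i := psi (a i *: mm i0).
have hc : forall i, cc N.+1 (u i) = cc N.+1 (w i).
  move=> i; have := hchi i i0; rewrite /chi => /enum_rank_inj eF.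
  have := congr1 (fun g : {ffun 'I_l -> 'I_N.+1} => val (g i)) eF.
  by rewrite !ffunE /= !inordK // cc_lt.
pose e i := frc (u i) - frc (w i).
have he : forall i, `|e i| * N.+1%:R < 1 by move=> i; apply: cc_cell.
have s1 := psum (index_enum 'I_l) (fun i => a i *: mm i) padd.
rewrite hsum in s1.
have s2 := psum (index_enum 'I_l) (fun i => a i *: mm i0) padd.
have s2' : isZ (psi (\sum_(i < l) a i *: mm i0)).
  by rewrite sumE; apply: p0; exists (mm i0).
have s3 : isZ (\sum_(i < l) ((Num.floor (u i))%:~R - (Num.floor (w i))%:~R)).
  by apply: rpred_sum => i _; zt.
have eE : \sum_(i < l) e i = \sum_(i < l) u i - \sum_(i < l) w i -
    \sum_(i < l) ((Num.floor (u i))%:~R - (Num.floor (w i))%:~R).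
  rewrite -!sumrB; apply: eq_bigr => i _; rewrite /e /frc; ring.
have hZ : isZ (psi b - \sum_(i < l) e i).
  rewrite eE.
  have -> : psi b - (\sum_(i < l) u i - \sum_(i < l) w i -
      \sum_(i < l) ((Num.floor (u i))%:~R - (Num.floor (w i))%:~R)) =
    (psi b - \sum_(i < l) u i) - (psi (\sum_(i < l) a i *: mm i0) - \sum_(i < l) w i)
    + psi (\sum_(i < l) a i *: mm i0)
    + \sum_(i < l) ((Num.floor (u i))%:~R - (Num.floor (w i))%:~R) by ring.
  by zt.
apply: (final pb hZ).
apply: (Order.POrderTheory.le_lt_trans (y := \sum_(i < l) `|e i| * N.+1%:R)).
  by rewrite -mulr_suml; apply: ler_wpM2r; [exact: ler0n | exact: ler_norm_sum].
apply: (Order.POrderTheory.lt_le_trans (y := \sum_(i < l) (1 : rat))).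
  apply: ltr_sum; last by move=> i _; exact: he.
  by apply/hasP; exists i0 => //; exact: mem_index_enum.
by rewrite sumr_const card_ord.
Qed.
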